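(* Let $G=(V,E)$ be a directed multigraph with arc costs $c\in\mathbb{R}^E$ and gains $\gamma\in\mathbb{R}^E_{>0}$, $u\in V$, $\mathcal{D}:=\{x\in\mathbb{R}^E_{\ge0}: x(\delta^+(u))=1,\ \nabla x_v=0\ \forall v\ne u\}$, and $f(\delta):=\inf_{x\in\mathcal{D}}\big(c^\top x+\delta\sum_{e\in\delta^-(u)}\gamma_ex_e-\delta\big)$. For any $\delta\in\mathbb{R}$, $f(\delta)=-\infty$ if and only if $\mathcal{D}\ne\emptyset$ and the graph $G\setminus\delta^+(u)$ contains a negative unit-gain cycle, a negative bicycle, or a $(\delta,u)$-negative flow-generating cycle.
   Context: $\delta^\pm(v)$: arcs leaving/entering $v$; $\nabla x_v:=\sum_{e\in\delta^+(v)}x_e-\sum_{e\in\delta^-(v)}\gamma_ex_e$. For a walk $P$ with arcs $e_1,\dots,e_k$: $c(P):=\sum_{i=1}^k(\prod_{j<i}\gamma_{e_j})c_{e_i}$, $\gamma(P):=\prod_i\gamma_{e_i}$. A cycle at $v$ is a $v$-$v$ walk whose intermediate nodes are distinct; it is flow-generating if $\gamma(C)>1$, unit-gain if $\gamma(C)=1$, flow-absorbing if $\gamma(C)<1$; a unit-gain cycle is negative if $c(C)<0$. A bicycle is a walk $CPD$ where $C$ is a flow-generating cycle at $v$, $D$ a flow-absorbing cycle at $w$, and $P$ a $v$-$w$ path; it is negative if $c(P)+\gamma(P)\frac{c(D)}{1-\gamma(D)}<\frac{-c(C)}{\gamma(C)-1}$. A flow-generating cycle $C$ is $(\delta,u)$-negative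 if there is a path $P$ from a node $v\in V(C)$ to $u$ such that $c(C)+(\gamma(C)-1)(c(P)+\gamma(P)\delta)<0$, where $C$ is regarded as a cycle at $v$. *)

(* Defs.v *)
From HB Require Import structures.
From mathcomp Require Import all_boot all_order all_algebra.
Set Implicit Arguments. Unset Strict Implicit. Unset Printing Implicit Defensive.
Import Order.TTheory GRing.Theory Num.Theory.
Local Open Scope ring_scope.

Section Gain.
Variables (R : realFieldType) (V E : finType) (src dst : E -> V).
Variables (c gam : E -> R).

Fixpoint walk (v w : V) (P : seq E) : bool :=
  match P with
  | [::] => v == w
  | e :: P' => (src e == v) && walk (dst e) w P'
  end.

(* c(P) = sum_i (prod_{j<i} gam e_j) c e_i *)
Fixpoint wcost (P : seq E) : R :=
  match P with
  | [::] => 0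
  | e :: P' => c e + gam e * wcost P'
  end.

Definition wgain (P : seq E) : R := \prod_(e <- P) gam e.

Definition is_path (v w : V) (P : seq E) : bool :=
  walk v w P && uniq (v :: map dst P).

Definition is_cycle (v : V) (C : seq E) : bool :=
  (C != [::]) && walk v v C && uniq (map src C).

(* arcs of the subgraph G \ delta^+(u) *)
Definition avoids_out (u : V) (P : seq E) : bool := all (fun e => src e != u) P.

Definition has_neg_unit_gain_cycle (u : V) : Prop :=
  exists v C, [/\ is_cycle v C, avoids_out u C, wgain C = 1 & wcost C < 0].

Definition has_neg_bicycle (u : V) : Prop :=
  exists v w C P D,
    [/\ is_cycle v C, is_path v w P, is_cycle w D,
        avoids_out u (C ++ P ++ D) &
        [/\ 1 < wgain C, wgain D < 1 &
        wcost P + wgain P * (wcost D / (1 - wgain D)) < - wcost C / (wgain C - 1)]].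

Definition has_neg_gen_cycle (delta : R) (u : V) : Prop :=
  exists v C P,
    [/\ is_cycle v C, is_path v u P, avoids_out u (C ++ P),
        1 < wgain C &
        wcost C + (wgain C - 1) * (wcost P + wgain P * delta) < 0].

Definition nabla (x : E -> R) (v : V) : R :=
  \sum_(e | src e == v) x e - \sum_(e | dst e == v) gam e * x e.

Definition inD (u : V) (x : E -> R) : Prop :=
  [/\ forall e, 0 <= x e,
      \sum_(e | src e == u) x e = 1 &
      forall v, v != u -> nabla x v = 0].

Definition objective (delta : R) (u : V) (x : E -> R) : R :=
  \sum_e c e * x e + delta * \sum_(e | dst e == u) gam e * x e - delta.

(* f(delta) = -infinity, i.e. the infimum over D is unbounded below
   (the infimum over an empty D is +infinity). *)
Definition f_minus_infty (delta : R) (u : V) : Prop :=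
  forall M : R, exists x, inD u x /\ objective delta u x < M.

End Gain.

(* Main.v *)
Require Import Defs.
From HB Require Import structures.
From mathcomp Require Import all_boot all_order all_algebra.
From mathcomp Require Import ring lra.
From Stdlib Require Import ClassicalEpsilon Classical_Prop.
Set Implicit Arguments. Unset Strict Implicit. Unset Printing Implicit Defensive.
Import Order.TTheory GRing.Theory Num.Theory.
Local Open Scope ring_scope.

Definition asbool (P : Prop) : bool :=
  if excluded_middle_informative P then true else false.
Lemma asboolP (P : Prop) : reflect P (asbool P).
Proof. by rewrite /asbool; case: excluded_middle_informative => h; constructor. Qed.

Section Comb.
Variables (V E : finType) (src dst : E -> V).
Local Notation walk := (walk src dst).
Local Notation is_path := (is_path src dst).
Local Notation is_cycle := (is_cycle src dst).

Lemma walk_cat v z w P Q : walk v z P -> walk z w Q -> walk v w (P ++ Q).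
Proof.
elim: P v => [|e P IH] v /=; first by move=> /eqP -> .
by case/andP=> -> hP hQ; rewrite (IH _ hP hQ).
Qed.

Lemma walk_catE v w P Q : walk v w (P ++ Q) -> exists z, walk v z P /\ walk z w Q.
Proof.
elim: P v => [|e P IH] v /=; first by move=> h; exists v.
case/andP=> he /IH [z [h1 h2]]; exists z; by rewrite he h1.
Qed.

Lemma walk_rcons v z P e : walk v z P -> src e = z -> walk v (dst e) (rcons P e).
Proof. by move=> h he; rewrite -cats1; apply: (walk_cat h); rewrite /= he !eqxx. Qed.

Lemma walk_srcs v w P : walk v w P -> rcons (map src P) w = v :: map dst P.
Proof.
elim: P v => [|e P IH] v /=; first by move=> /eqP ->.
by case/andP=> /eqP -> /IH ->.
Qed.

Lemma cut_path a z Q v : is_path a z Q -> v \in a :: map dst Q ->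
  exists Q1 Q2, [/\ Q = Q1 ++ Q2, walk a v Q1 & is_path v z Q2].
Proof.
elim: Q a => [|f Q IH] a.
  move=> hp; rewrite inE => /eqP ->; exists [::], [::]; split=> //=.
rewrite /is_path /= => /andP [/andP [/eqP hf hw] hu].
rewrite in_cons; case: eqP => [-> _|_ /= hv].
  exists [::], (f :: Q); split=> //=.
  by rewrite /is_path /= hf eqxx hw.
have hp : is_path (dst f) z Q by rewrite /is_path hw; case/andP: hu.
have [Q1 [Q2 [-> h1 h2]]] := IH _ hp hv.
exists (f :: Q1), Q2; split=> //=; by rewrite hf eqxx h1.
Qed.

Lemma shorten_walk v z P : walk v z P -> exists Q, is_path v z Q /\ {subset Q <= P}.
Proof.
elim: P v => [|e P IH] v /=.
  move=> h; exists [::]; split=> //; by rewrite /is_path /= h.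
case/andP=> /eqP he /IH [Q [hQ sQ]].
case hv: (v \in dst e :: map dst Q).
  have [Q1 [Q2 [hQe _ h2]]] := cut_path hQ hv.
  exists Q2; split=> // f hf; rewrite in_cons; apply/orP; right; apply: sQ.
  by rewrite hQe mem_cat hf orbT.
exists (e :: Q); split.
  case/andP: hQ => hw hu.
  rewrite /is_path /= he eqxx hw /=; rewrite /= in hu; by rewrite hv hu.
move=> f; rewrite !in_cons => /orP [->//|/sQ ->]; by rewrite orbT.
Qed.

Lemma path_size v z P : is_path v z P -> (size P < #|V|)%N.
Proof.
case/andP=> _ /card_uniqP h.
have := max_card (mem (v :: map dst P)).
by rewrite h /= size_map.
Qed.

Lemma cycle_size v C : is_cycle v C -> (size C <= #|V|)%N.
Proof.
case/andP=> _ /card_uniqP h.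
have := max_card (mem (map src C)).
by rewrite h size_map.
Qed.

Lemma cycle_walk v C : is_cycle v C -> walk v v C.
Proof. by case/andP=> /andP []. Qed.

Lemma cycle_nil v C : is_cycle v C -> C != [::].
Proof. by case/andP=> /andP []. Qed.

Lemma cycle_dst v C f : is_cycle v C -> f \in C -> dst f \in map src C.
Proof.
case/andP=> /andP [hn hw] _ hf.
have h := walk_srcs hw.
have : dst f \in rcons (map src C) v by rewrite h in_cons map_f ?orbT.
rewrite mem_rcons in_cons => /orP [/eqP ->|//].
case: C hn hw {h hf} => [//|g C] _ /= /andP [/eqP <- _].
by rewrite in_cons eqxx.
Qed.

Lemma cycle_head v C : is_cycle v C -> v \in map src C.
Proof.
case/andP=> /andP [hn hw] _.
case: C hn hw => [//|g C] _ /= /andP [/eqP <- _].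
by rewrite in_cons eqxx.
Qed.

Fixpoint all_seqs n : seq (seq E) :=
  if n is n'.+1 then [::] :: [seq e :: s | e <- enum E, s <- all_seqs n']
  else [:: [::]].

Lemma mem_all_seqs n s : (size s <= n)%N -> s \in all_seqs n.
Proof.
elim: n s => [|n IH] [|e s] //=; try by rewrite inE.
move=> hs; rewrite in_cons; apply/orP; right.
by apply: (allpairs_f (fun e s => e :: s)); rewrite ?mem_enum ?IH.
Qed.

End Comb.

Section Pot.
Variables (R : realFieldType) (V E : finType) (src dst : E -> V).
Local Notation walk := (walk src dst).
Local Notation is_path := (is_path src dst).
Local Notation is_cycle := (is_cycle src dst).

Definition minl (T : Type) (f : T -> R) (d : R) (l : seq T) :=
  foldr (fun P m => if f P <= m then f P else m) d l.

Lemma minl_le (T : eqType) (f : T -> R) d l x : x \in l -> minl f d l <= f x.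
Proof.
elim: l => [//|y l IH] /=; rewrite in_cons => /orP [/eqP ->|hx].
  by case: ifP => // /negbT; rewrite -ltNge => /ltW.
case: ifP => h; last exact: IH.
by apply: le_trans h (IH hx).
Qed.

Lemma minl_in (T : eqType) (f : T -> R) d l :
  minl f d l = d \/ exists2 x, x \in l & minl f d l = f x.
Proof.
elim: l => [|y l IH] /=; first by left.
case: ifP => _; first by right; exists y; rewrite ?in_cons ?eqxx.
case: IH => [->|[x hx ->]]; first by left.
by right; exists x; rewrite // in_cons hx orbT.
Qed.

Lemma minl_ex (T : eqType) (f : T -> R) (l : seq T) x0 : x0 \in l ->
  exists2 x, x \in l & forall y, y \in l -> f x <= f y.
Proof.
move=> h0; case: (minl_in f (f x0) l) => [e|[x hx e]].
  by exists x0 => // y hy; rewrite -e; apply: minl_le.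
by exists x => // y hy; rewrite -e; apply: minl_le.
Qed.

Lemma lb_seq (T : eqType) (f : T -> R) (l : seq T) : exists K, forall x, x \in l -> K <= f x.
Proof. by exists (minl f 0 l) => x hx; apply: minl_le. Qed.

Lemma pot (A : pred E) (k : E -> R) : (forall e, 0 < k e) ->
  (forall v C, is_cycle v C -> all A C -> 1 <= \prod_(e <- C) k e) ->
  exists w : V -> R, (forall v, 0 < w v) /\ (forall e, A e -> w (src e) <= k e * w (dst e)).
Proof.
move=> kpos hcyc.
pose okp v P := [exists z, is_path v z P] && all A P.
pose fP (P : seq E) := \prod_(e <- P) k e.
have fPpos P : 0 < fP P by apply: prodr_gt0 => e _.
pose L v := [seq P <- all_seqs E #|V| | okp v P].
pose w v := minl fP 1 (L v).
have wle v P : okp v P -> w v <= fP P.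
  move=> hP; apply: minl_le; rewrite mem_filter hP /=.
  apply: mem_all_seqs; case/andP: hP => /existsP [z /path_size h] _.
  exact: ltnW.
have wex v : exists2 P, okp v P & w v = fP P.
  case: (minl_in fP 1 (L v)) => [e|[P]].
    exists [::]; last by rewrite /w e /fP big_nil.
    rewrite /okp /= andbT; apply/existsP; exists v; by rewrite /is_path /= eqxx.
  by rewrite mem_filter => /andP [hP _] e; exists P.
exists w; split.
  by move=> v; have [P _ ->] := wex v.
move=> e hA.
have [P /andP [/existsP [z hP] hPA] ->] := wex (dst e).
case hv: (src e \in dst e :: map dst P).
  have [P1 [P2 [hPe h1 h2]]] := cut_path hP hv.
  have hcy : is_cycle (src e) (e :: P1).
    rewrite /is_cycle /= eqxx h1 /=.
    have := walk_srcs h1.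
    case/andP: hP => _; rewrite hPe map_cat -cat_cons cat_uniq => /andP [hu _] e1.
    by move: hu; rewrite -e1 rcons_uniq.
  have hA1 : all A (e :: P1) by rewrite /= hA; move: hPA; rewrite hPe all_cat => /andP [].
  have := hcyc _ _ hcy hA1; rewrite big_cons => h.
  have hok2 : okp (src e) P2.
    rewrite /okp; apply/andP; split; first by apply/existsP; exists z.
    by move: hPA; rewrite hPe all_cat => /andP [].
  apply: le_trans (wle _ _ hok2) _.
  rewrite /fP hPe big_cat /= mulrA -[X in X <= _]mul1r ler_wpM2r //.
  exact: ltW (fPpos P2).
have hok : okp (src e) (e :: P).
  rewrite /okp; apply/andP; split; last by rewrite /= hA hPA.
  apply/existsP; exists z.
  case/andP: hP => hw hu; rewrite /is_path /= eqxx hw /=; rewrite /= in hu; by rewrite hv hu.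
by apply: le_trans (wle _ _ hok) _; rewrite /fP big_cons.
Qed.

End Pot.

Section Flow.
Variables (R : realFieldType) (V E : finType) (src dst : E -> V) (c gam : E -> R).
Hypothesis hgam : forall e, 0 < gam e.
Variables (u : V) (delta : R).
Local Notation walk := (walk src dst).
Local Notation is_path := (is_path src dst).
Local Notation is_cycle := (is_cycle src dst).
Local Notation wcost := (wcost c gam).
Local Notation wgain := (wgain gam).
Local Notation nabla := (nabla src dst gam).

Fixpoint flow (a : R) (P : seq E) (f : E) : R :=
  if P is e :: P' then (if f == e then a else 0) + flow (a * gam e) P' f else 0.

Definition out (x : E -> R) := \sum_(f | src f == u) x f.
Definition Phi (x : E -> R) :=
  \sum_f c f * x f + delta * \sum_(f | dst f == u) gam f * x f.


Lemma sum_pick (p : pred E) (g : E -> R) e :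
  \sum_(f | p f) (if f == e then g f else 0) = if p e then g e else 0.
Proof.
rewrite -big_mkcondr.
case: ifP => hp.
  rewrite (eq_bigl (fun f => f == e)) ?big_pred1_eq // => f.
  by case: eqP => [->|]; rewrite ?hp ?andbF ?andbT.
by rewrite big_pred0 // => f; case: eqP => [->|]; rewrite ?hp ?andbF ?andbT.
Qed.

Lemma flow_ge0 a P f : 0 <= a -> 0 <= flow a P f.
Proof.
elim: P a => [|e P IH] a ha //=.
apply: addr_ge0; first by case: ifP.
by apply: IH; apply: mulr_ge0 => //; apply: ltW.
Qed.

Lemma flow_supp a P f : flow a P f != 0 -> f \in P.
Proof.
elim: P a => [|e P IH] a /=; first by rewrite eqxx.
move=> h; rewrite in_cons; case: (f =P e) h => [->|_]; rewrite ?eqxx // add0r => /IH ->; by rewrite orbT.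
Qed.

Lemma flow_head a e P : 0 < a -> 0 < flow a (e :: P) e.
Proof.
move=> ha /=; rewrite eqxx; apply: ltr_wpDr => //.
by apply: flow_ge0; apply: mulr_ge0; apply: ltW.
Qed.

Lemma flow_cost a P : \sum_f c f * flow a P f = a * wcost P.
Proof.
elim: P a => [|e P IH] a /=; first by rewrite big1 ?mulr0 // => f; rewrite mulr0.
rewrite (eq_bigr (fun f => (if f == e then c f * a else 0) + c f * flow (a * gam e) P f)).
  rewrite big_split /= sum_pick IH /=; ring.
by move=> f _; rewrite mulrDr; case: eqP => // _; rewrite mulr0.
Qed.

Lemma flow_nabla a v w P z : walk v w P ->
  nabla (flow a P) z = a * (v == z)%:R - a * wgain P * (w == z)%:R.
Proof.
rewrite /nabla /wgain.
elim: P a v => [|e P IH] a v /=.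
  move=> /eqP ->; rewrite big_nil.
  rewrite (eq_bigr (fun _ => 0)) ?big1 // ?mulr0 //; last by move=> *; rewrite mulr0.
  ring.
case/andP=> /eqP he hw.
have IHe := IH (a * gam e) _ hw.
rewrite [X in X - _](eq_bigr (fun f => (if f == e then a else 0) + flow (a * gam e) P f)) //.
rewrite [X in _ - X](eq_bigr (fun f => (if f == e then gam f * a else 0) + gam f * flow (a * gam e) P f)); last first.
  by move=> f _; rewrite mulrDr; case: eqP => // _; rewrite mulr0.
rewrite !big_split /= sum_pick (sum_pick (fun f => dst f == z)).
have -> : forall p q r s : R, p + q - (r + s) = (p - r) + (q - s) by move=> *; ring.
rewrite IHe big_cons -he; case: (src e == z); case: (dst e == z); rewrite /=; ring.
Qed.

Lemma flow_out0 a P : avoids_out src u P -> out (flow a P) = 0.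
Proof.
rewrite /out; elim: P a => [|e P IH] a /=; first by rewrite big1.
case/andP=> he hP.
rewrite big_split /= (sum_pick (fun f => src f == u) (fun _ => a)) IH // addr0.
by rewrite (negbTE he).
Qed.

Lemma flow_out1 a e P : src e = u -> avoids_out src u P -> out (flow a (e :: P)) = a.
Proof.
move=> he hP; rewrite /out /= big_split /=.
rewrite (sum_pick (fun f => src f == u) (fun _ => a)) -/(out _) flow_out0 //.
by rewrite he eqxx addr0.
Qed.

Lemma nablaL x a b t z : (forall f, x f = a f + t * b f) ->
  nabla x z = nabla a z + t * nabla b z.
Proof.
move=> h; rewrite /nabla (eq_bigr _ (fun f _ => h f)).
rewrite [X in _ - X](eq_bigr (fun f => gam f * a f + t * (gam f * b f))); last first.
  by move=> f _; rewrite h; ring.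
rewrite !big_split /= -!mulr_sumr; ring.
Qed.

Lemma outL x a b t : (forall f, x f = a f + t * b f) -> out x = out a + t * out b.
Proof.
by move=> h; rewrite /out (eq_bigr _ (fun f _ => h f)) big_split /= -mulr_sumr.
Qed.

Lemma PhiL x a b t : (forall f, x f = a f + t * b f) -> Phi x = Phi a + t * Phi b.
Proof.
move=> h; rewrite /Phi.
rewrite (eq_bigr (fun f => c f * a f + t * (c f * b f))); last first.
  by move=> f _; rewrite h; ring.
rewrite [X in delta * X](eq_bigr (fun f => gam f * a f + t * (gam f * b f))); last first.
  by move=> f _; rewrite h; ring.
rewrite !big_split /= -!mulr_sumr; ring.
Qed.

Lemma in_eq x : \sum_(f | dst f == u) gam f * x f = out x - nabla x u.
Proof. rewrite /nabla /out; ring. Qed.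

Lemma PhiE x : Phi x = \sum_f c f * x f + delta * (out x - nabla x u).
Proof. by rewrite /Phi in_eq. Qed.


Lemma flow_nsupp a P f : f \notin P -> flow a P f = 0.
Proof. by move=> h; apply/eqP; apply: contraNT h; apply: flow_supp. Qed.

Lemma wgain_gt0 P : 0 < wgain P.
Proof. by apply: prodr_gt0 => e _. Qed.

Lemma wgain_cons e P : wgain (e :: P) = gam e * wgain P.
Proof. by rewrite /wgain big_cons. Qed.

Definition good (y : E -> R) (L : seq E) :=
  [/\ forall f, 0 <= y f, forall f, y f != 0 -> f \in L,
      forall z, z != u -> nabla y z = 0 & exists f, y f != 0].

Lemma flow_nz a P : 0 < a -> P != [::] -> exists f, 0 < flow a P f.
Proof. by case: P => // e P ha _; exists e; apply: flow_head. Qed.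

Lemma avoids_cat P Q : avoids_out src u (P ++ Q) = avoids_out src u P && avoids_out src u Q.
Proof. by rewrite /avoids_out all_cat. Qed.

Lemma mk_unit v C : walk v v C -> C != [::] -> avoids_out src u C -> wgain C = 1 ->
  exists y, [/\ good y C, out y = 0 & Phi y = wcost C].
Proof.
move=> hw hn ha hg; exists (flow 1 C).
have hn0 z : nabla (flow 1 C) z = 0 by rewrite (flow_nabla _ _ hw) hg; ring.
split; last by rewrite PhiE flow_out0 // hn0 flow_cost; ring.
- split=> //.
  + by move=> f; apply: flow_ge0.
  + by move=> f; apply: flow_supp.
  + by have [f hf] := flow_nz ltr01 hn; exists f; rewrite gt_eqF.
- exact: flow_out0.
Qed.

Lemma mk_gen v C P : walk v v C -> C != [::] -> walk v u P -> avoids_out src u (C ++ P) ->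
  1 < wgain C ->
  exists y, [/\ good y (C ++ P), out y = 0 &
    Phi y = (wgain C - 1)^-1 * (wcost C + (wgain C - 1) * (wcost P + wgain P * delta))].
Proof.
move=> hC hn hP; rewrite avoids_cat => /andP [haC haP] hg.
set a := (wgain C - 1)^-1.
have hg1 : wgain C - 1 != 0 by rewrite subr_eq0 gt_eqF.
have ha : 0 < a by rewrite invr_gt0 subr_gt0.
pose y f := flow a C f + 1 * flow 1 P f.
have hy f : y f = flow a C f + 1 * flow 1 P f by [].
have hnab z : nabla y z = (v == z)%:R * (a - a * wgain C + 1) - wgain P * (u == z)%:R.
  rewrite (nablaL _ hy) (flow_nabla _ _ hC) (flow_nabla _ _ hP); ring.
have hout : out y = 0 by rewrite (outL hy) !flow_out0 //; ring.
have ha1 : a - a * wgain C + 1 = 0 by rewrite /a; field.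
exists y; split=> //.
- split.
  + by move=> f; rewrite hy mul1r; apply: addr_ge0; apply: flow_ge0 => //; apply: ltW.
  + move=> f; rewrite hy mem_cat; case: (boolP (f \in C)) => // hfC.
    by case: (boolP (f \in P)) => // hfP; rewrite !flow_nsupp // mulr0 addr0 eqxx.
  + by move=> z hz; rewrite hnab ha1 mulr0 eq_sym (negbTE hz) mulr0 subr0.
  + have [f hf] := flow_nz ha hn; exists f; rewrite hy mul1r gt_eqF //.
    by apply: ltr_wpDr => //; apply: flow_ge0.
- rewrite PhiE hout hnab ha1 mulr0 eqxx.
  rewrite (eq_bigr (fun f => c f * flow a C f + 1 * (c f * flow 1 P f))); last first.
    by move=> f _; rewrite hy; ring.
  rewrite big_split /= -mulr_sumr !flow_cost /a; field; exact: hg1.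
Qed.

Lemma mk_bic v w C P D : walk v v C -> C != [::] -> walk v w P -> walk w w D ->
  avoids_out src u (C ++ P ++ D) -> 1 < wgain C -> wgain D < 1 ->
  exists y, [/\ good y (C ++ P ++ D), out y = 0 &
    Phi y = wcost C / (wgain C - 1) + wcost P + wgain P * (wcost D / (1 - wgain D))].
Proof.
move=> hC hn hP hD; rewrite !avoids_cat => /and3P [haC haP haD] hgC hgD.
set a := (wgain C - 1)^-1.
set b := wgain P / (1 - wgain D).
have hg1 : wgain C - 1 != 0 by rewrite subr_eq0 gt_eqF.
have hg2 : 1 - wgain D != 0 by rewrite subr_eq0 gt_eqF.
have ha : 0 < a by rewrite invr_gt0 subr_gt0.
have hb : 0 < b by apply: divr_gt0; [exact: wgain_gt0 | rewrite subr_gt0].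
pose y f := (flow a C f + 1 * flow 1 P f) + 1 * flow b D f.
have hy f : y f = (flow a C f + 1 * flow 1 P f) + 1 * flow b D f by [].
have hy1 f : flow a C f + 1 * flow 1 P f = flow a C f + 1 * flow 1 P f by [].
have hnab z : nabla y z = (v == z)%:R * (a - a * wgain C + 1) + (w == z)%:R * (b - b * wgain D - wgain P).
  rewrite (nablaL _ hy) (nablaL _ hy1) (flow_nabla _ _ hC) (flow_nabla _ _ hP) (flow_nabla _ _ hD); ring.
have hout : out y = 0 by rewrite (outL hy) (outL hy1) !flow_out0 //; ring.
have ha1 : a - a * wgain C + 1 = 0 by rewrite /a; field.
have hb1 : b - b * wgain D - wgain P = 0 by rewrite /b; field.
exists y; split=> //.
- split.
  + move=> f; rewrite hy !mul1r; apply: addr_ge0; [apply: addr_ge0|];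
      apply: flow_ge0; rewrite ?ler01 ?(ltW ha) ?(ltW hb) //.
  + move=> f; rewrite hy !mem_cat; case: (boolP (f \in C)) => // hfC.
    case: (boolP (f \in P)) => // hfP; case: (boolP (f \in D)) => // hfD.
    by rewrite !flow_nsupp // !mulr0 !addr0 eqxx.
  + by move=> z _; rewrite hnab ha1 hb1 !mulr0 addr0.
  + have [f hf] := flow_nz ha hn; exists f; rewrite hy !mul1r gt_eqF //.
    apply: ltr_wpDr; first exact: flow_ge0 (ltW hb).
    by apply: ltr_wpDr => //; apply: flow_ge0.
- rewrite PhiE hout hnab ha1 hb1 !mulr0 addr0.
  rewrite (eq_bigr (fun f => (c f * flow a C f + 1 * (c f * flow 1 P f)) + 1 * (c f * flow b D f))); last first.
    by move=> f _; rewrite hy; ring.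
  rewrite !big_split /= -!mulr_sumr !flow_cost /a /b; field.
  by rewrite hg1 hg2.
Qed.

Lemma mk_upath e0 Q : src e0 = u -> walk u u (e0 :: Q) -> avoids_out src u Q ->
  exists y, [/\ good y (e0 :: Q), out y = 1 &
    Phi y = wcost (e0 :: Q) + delta * wgain (e0 :: Q)].
Proof.
move=> he hw ha; exists (flow 1 (e0 :: Q)).
have hnab z : nabla (flow 1 (e0 :: Q)) z = (u == z)%:R * (1 - wgain (e0 :: Q)).
  by rewrite (flow_nabla _ _ hw); ring.
have hout : out (flow 1 (e0 :: Q)) = 1 by apply: flow_out1.
split=> //.
- split.
  + by move=> f; apply: flow_ge0.
  + by move=> f; apply: flow_supp.
  + by move=> z hz; rewrite hnab eq_sym (negbTE hz) mul0r.
  + by exists e0; rewrite gt_eqF // flow_head.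
- by rewrite PhiE hout hnab eqxx flow_cost /=; ring.
Qed.

Lemma mk_uabs e0 Q w D : src e0 = u -> walk u w (e0 :: Q) -> avoids_out src u Q ->
  walk w w D -> avoids_out src u D -> wgain D < 1 ->
  exists y, [/\ good y ((e0 :: Q) ++ D), out y = 1 &
    Phi y = wcost (e0 :: Q) + wgain (e0 :: Q) * (wcost D / (1 - wgain D))].
Proof.
move=> he hP haQ hD haD hgD.
set P := e0 :: Q.
set b := wgain P / (1 - wgain D).
have hg2 : 1 - wgain D != 0 by rewrite subr_eq0 gt_eqF.
have hb : 0 < b by apply: divr_gt0; [exact: wgain_gt0 | rewrite subr_gt0].
pose y f := flow 1 P f + 1 * flow b D f.
have hy f : y f = flow 1 P f + 1 * flow b D f by [].
have hnab z : nabla y z = (u == z)%:R + (w == z)%:R * (b - b * wgain D - wgain P).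
  rewrite (nablaL _ hy) (flow_nabla _ _ hP) (flow_nabla _ _ hD); ring.
have hb1 : b - b * wgain D - wgain P = 0 by rewrite /b; field.
have hout : out y = 1 by rewrite (outL hy) flow_out1 // flow_out0 //; ring.
exists y; split=> //.
- split.
  + move=> f; rewrite hy !mul1r; apply: addr_ge0;
      apply: flow_ge0; rewrite ?ler01 ?(ltW hb) //.
  + move=> f; rewrite hy mem_cat; case: (boolP (f \in P)) => // hfP.
    case: (boolP (f \in D)) => // hfD.
    by rewrite !flow_nsupp // !mulr0 !addr0 eqxx.
  + by move=> z hz; rewrite hnab hb1 mulr0 addr0 eq_sym (negbTE hz).
  + exists e0; rewrite hy !mul1r gt_eqF //.
    by apply: ltr_pwDl; [apply: flow_head | apply: flow_ge0 (ltW hb)].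
- rewrite PhiE hout hnab hb1 mulr0 addr0 eqxx.
  rewrite (eq_bigr (fun f => c f * flow 1 P f + 1 * (c f * flow b D f))); last first.
    by move=> f _; rewrite hy; ring.
  rewrite big_split -mulr_sumr !flow_cost /b /=; field.
  exact: hg2.
Qed.

Definition reach (A : pred E) v z := asbool (exists P, walk v z P && all A P).

Lemma reach_refl A v : reach A v v.
Proof. by rewrite /reach; apply/asboolP; exists [::]; rewrite /= eqxx. Qed.

Lemma reach_step A v e : reach A v (src e) -> A e -> reach A v (dst e).
Proof.
rewrite /reach => /asboolP [P /andP [hw ha]] hA; apply/asboolP; exists (rcons P e).
by rewrite (walk_rcons hw) //= all_rcons hA ha.
Qed.

Lemma reach_path A v z : reach A v z -> exists P, is_path v z P /\ all A P.
Proof.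
rewrite /reach => /asboolP [P /andP [hw ha]].
have [Q [hQ sQ]] := shorten_walk hw.
exists Q; split=> //; apply/allP => f /sQ hf; exact: (allP ha).
Qed.

Lemma reach_arcs A v0 v w P : reach A v0 v -> walk v w P -> all A P ->
  forall f, f \in P -> reach A v0 (src f).
Proof.
elim: P v => [|e P IH] v //= hr /andP [/eqP he hw] /andP [hA hAP] f.
rewrite in_cons => /orP [/eqP ->|hf]; first by rewrite he.
apply: (IH (dst e)) => //; apply: reach_step => //; by rewrite he.
Qed.

Lemma sum_part (p : E -> V) (g : V -> R) (h : E -> R) :
  \sum_z g z * \sum_(e | p e == z) h e = \sum_e g (p e) * h e.
Proof.
symmetry; rewrite (partition_big p xpredT) //=; apply: eq_bigr => z _.
by rewrite mulr_sumr; apply: eq_bigr => e /eqP ->.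
Qed.

Lemma pot_sum (S : pred V) (th : V -> R) x : (forall z, S z -> nabla x z = 0) ->
  \sum_e x e * ((S (src e))%:R * th (src e) - (S (dst e))%:R * gam e * th (dst e)) = 0.
Proof.
move=> hS.
have h0 : \sum_z (S z)%:R * th z * nabla x z = 0.
  apply: big1 => z _; case: (boolP (S z)) => hz; [by rewrite hS // mulr0 | by rewrite /= !mul0r].
rewrite -[X in _ = X]h0 /nabla.
rewrite (eq_bigr (fun z => (S z)%:R * th z * \sum_(e | src e == z) x e -
   (S z)%:R * th z * \sum_(e | dst e == z) gam e * x e)); last by move=> z _; ring.
rewrite sumrB !sum_part -sumrB; apply: eq_bigr => e _; ring.
Qed.

Lemma telescope (th : V -> R) v w P : walk v w P ->
  (forall f, f \in P -> th (src f) = gam f * th (dst f)) -> th v = wgain P * th w.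
Proof.
elim: P v => [|e P IH] v /=; first by move=> /eqP ->; rewrite /wgain big_nil mul1r.
case/andP=> /eqP he hw h.
rewrite wgain_cons -mulrA -(IH _ hw); last by move=> f hf; apply: h; rewrite in_cons hf orbT.
by rewrite -he; apply: h; rewrite in_cons eqxx.
Qed.

Lemma FT x (F : pred V) : (forall e, 0 <= x e) -> (forall z, F z -> nabla x z = 0) ->
  (forall e, x e != 0 -> F (src e) -> F (dst e)) ->
  (forall v C, is_cycle v C -> all (fun e => (x e != 0) && F (src e)) C -> 1 <= wgain C) ->
  exists th : V -> R, (forall z, 0 < th z) /\
    (forall e, x e != 0 -> (F (src e) -> th (src e) = gam e * th (dst e)) /\
                          (F (dst e) -> F (src e))).
Proof.
move=> hx hc hcl hcyc.
have [w [wpos hw]] := pot hgam hcyc.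
exists w; split=> // e hxe.
have hs := pot_sum w hc.
have hle f : 0 <= - (x f * ((F (src f))%:R * w (src f) - (F (dst f))%:R * gam f * w (dst f))).
  case: (x f =P 0) => [->|/eqP hxf]; first by rewrite mul0r oppr0.
  rewrite -mulrN; apply: mulr_ge0 => //.
  case: (boolP (F (src f))) => hFs.
    rewrite (hcl _ hxf hFs) /= !mul1r oppr_ge0 subr_le0.
    by apply: hw; rewrite hxf hFs.
  rewrite mul0r sub0r opprK; apply: mulr_ge0; last exact: ltW.
  by apply: mulr_ge0; [case: (F (dst f)) | apply: ltW].
have := psumr_eq0P (P := xpredT) (fun f _ => hle f).
rewrite sumrN hs oppr0 => /(_ erefl e erefl) /eqP.
rewrite oppr_eq0 mulf_eq0 (negbTE hxe) /= => /eqP ht.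
split.
  move=> hFs; move: ht; rewrite hFs (hcl _ hxe hFs) /= !mul1r => /eqP.
  by rewrite subr_eq0 => /eqP.
move=> hFd; apply/negPn/negP => hFs; move: ht; rewrite hFd (negbTE hFs) /= mul0r mul1r sub0r.
move/eqP; rewrite oppr_eq0 mulf_eq0 (gt_eqF (hgam e)) (gt_eqF (wpos _)).
by [].
Qed.

Lemma inv_helper (a b g : R) : 0 < a -> 0 < b -> 0 < g -> a <= g^-1 * b -> g * b^-1 <= a^-1.
Proof.
move=> ha hb hg h.
have h1 : g * a <= b by have := ler_wpM2l (ltW hg) h; rewrite mulrA mulfV ?gt_eqF // mul1r.
have -> : g * b^-1 = a^-1 - (b - g * a) / (a * b) by field; rewrite !gt_eqF.
by rewrite lerBlDr lerDl; apply: divr_ge0; [rewrite subr_ge0 | apply: ltW; apply: mulr_gt0].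
Qed.

Lemma BT_core x (th : V -> R) (lam : R) : (forall e, 0 <= x e) ->
  (forall z, z != u -> nabla x z = 0) -> (forall e, x e != 0 -> src e != u) ->
  (forall z, 0 < th z) -> 1 <= lam ->
  (forall e, x e != 0 -> lam * gam e * th (dst e) <= th (src e)) ->
  forall e, x e != 0 -> th (src e) = (dst e != u)%:R * gam e * th (dst e).
Proof.
move=> hx hc hsrc thpos hlam hth.
have hs := pot_sum (S := fun z => z != u) th hc.
have hle f : 0 <= x f * ((src f != u)%:R * th (src f) - (dst f != u)%:R * gam f * th (dst f)).
  case: (x f =P 0) => [->|/eqP hxf]; first by rewrite mul0r.
  apply: mulr_ge0 => //; rewrite (hsrc _ hxf) mul1r subr_ge0.
  apply: le_trans (hth _ hxf); rewrite -!mulrA; apply: ler_pM.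
  - by case: (dst f != u).
  - by apply: mulr_ge0; apply: ltW.
  - by case: (dst f != u) => //=; apply: le_trans hlam.
  - done.
move=> e hxe.
have := psumr_eq0P (P := xpredT) (fun f _ => hle f) => /(_ hs e erefl).
move/eqP; rewrite mulf_eq0 (negbTE hxe) /= (hsrc _ hxe) mul1r subr_eq0 => /eqP.
by [].
Qed.



Definition Ap (x : E -> R) e := (x e != 0) && (src e != u).

Lemma Ap_avoid x P : all (Ap x) P -> avoids_out src u P.
Proof. by apply: sub_all => e /andP []. Qed.

Lemma Ap_supp x P f : all (Ap x) P -> f \in P -> x f != 0.
Proof. by move/allP => h /h /andP []. Qed.

Lemma BT x : (forall e, 0 <= x e) -> (forall z, z != u -> nabla x z = 0) ->
  (forall e, x e != 0 -> src e != u) ->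
  (forall v C, is_cycle v C -> all (Ap x) C -> wgain C < 1) ->
  (exists e, x e != 0) -> False.
Proof.
move=> hx hc hsrc hall [e0 he0].
case: (classic (exists v C, is_cycle v C /\ all (Ap x) C)) => [[v [C [hC hA]]]|hno].
- have kpos e : 0 < (gam e)^-1 by rewrite invr_gt0.
  have hcyc v' C' : is_cycle v' C' -> all (Ap x) C' -> 1 <= \prod_(e <- C') (gam e)^-1.
    move=> h1 h2; rewrite prodfV invf_ge1; first exact: ltW (hall _ _ h1 h2).
    exact: wgain_gt0.
  have [w [wpos hw]] := pot kpos hcyc.
  pose th z := (w z)^-1.
  have thpos z : 0 < th z by rewrite invr_gt0.
  have hth e : x e != 0 -> 1 * gam e * th (dst e) <= th (src e).
    move=> hxe; rewrite mul1r; apply: inv_helper => //; apply: hw.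
    by rewrite /Ap hxe hsrc.
  have ht := BT_core hx hc hsrc thpos (lexx 1) hth.
  have htC f : f \in C -> th (src f) = gam f * th (dst f).
    move=> hf; rewrite (ht _ (Ap_supp hA hf)).
    have : dst f != u.
      have /mapP [g hg ->] := cycle_dst hC hf.
      by move/allP: hA => /(_ g hg) /andP [].
    by move=> ->; rewrite mul1r.
  have := telescope (cycle_walk hC) htC.
  have hv := thpos v; have hg := hall _ _ hC hA.
  move=> h; have : (1 - wgain C) * th v = 0 by rewrite mulrBl -h mul1r subrr.
  move/eqP; rewrite mulf_eq0 (gt_eqF hv) orbF subr_eq0 => /eqP h1.
  by move: hg; rewrite -h1 ltxx.
- have kpos e : 0 < (2 * gam e)^-1 by rewrite invr_gt0 mulr_gt0.
  have hcyc v' C' : is_cycle v' C' -> all (Ap x) C' -> 1 <= \prod_(e <- C') (2 * gam e)^-1.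
    by move=> h1 h2; exfalso; apply: hno; exists v', C'.
  have [w [wpos hw]] := pot kpos hcyc.
  pose th z := (w z)^-1.
  have thpos z : 0 < th z by rewrite invr_gt0.
  have hth e : x e != 0 -> 2 * gam e * th (dst e) <= th (src e).
    move=> hxe; apply: inv_helper => //; first by apply: mulr_gt0.
    by apply: hw; rewrite /Ap hxe hsrc.
  have ht := BT_core hx hc hsrc thpos (ler1n _ 2) hth.
  have h1 := ht _ he0; have h2 := hth _ he0.
  have hp : 0 < gam e0 * th (dst e0) by apply: mulr_gt0.
  move: h1 h2 hp; case: (dst e0 != u) => /= -> h2 hp; rewrite -mulrA in h2; nra.
Qed.

Lemma path_walk v w P : is_path v w P -> walk v w P.
Proof. by case/andP. Qed.

Lemma tele_one (th : V -> R) v C : is_cycle v C -> (forall z, 0 < th z) ->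
  (forall f, f \in C -> th (src f) = gam f * th (dst f)) -> wgain C = 1.
Proof.
move=> hC thpos htC.
have h := telescope (cycle_walk hC) htC.
have hv := thpos v.
have : (1 - wgain C) * th v = 0 by rewrite mulrBl -h mul1r subrr.
move/eqP; rewrite mulf_eq0 (gt_eqF hv) orbF subr_eq0 => /eqP h1.
by rewrite -h1.
Qed.

Section Elem.
Variable K : R.
Hypothesis HK1 : forall P, (size P <= #|V|)%N -> K <= wcost P + delta * wgain P.
Hypothesis HK2 : forall P D, (size P <= #|V|)%N -> (size D <= #|V|)%N ->
  K <= wcost P + wgain P * (wcost D / (1 - wgain D)).
Hypothesis hnu : ~ has_neg_unit_gain_cycle src dst c gam u.
Hypothesis hnb : ~ has_neg_bicycle src dst c gam u.
Hypothesis hng : ~ has_neg_gen_cycle src dst c gam delta u.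

Definition elem_ok (x y : E -> R) :=
  [/\ forall f, 0 <= y f, forall f, y f != 0 -> x f != 0,
    forall z, z != u -> nabla y z = 0, exists f, y f != 0 & K * out y <= Phi y].

Lemma good_pack x y L : good y L -> (forall f, f \in L -> x f != 0) ->
  K * out y <= Phi y -> exists y, elem_ok x y.
Proof.
case=> h1 h2 h3 h4 hL hK; exists y; split=> // f /h2; exact: hL.
Qed.

Lemma elem x : (forall e, 0 <= x e) -> (forall z, z != u -> nabla x z = 0) ->
  (exists e, x e != 0) -> exists y, elem_ok x y.
Proof.
move=> hx hc hne.
pose A := Ap x.
have notu (F : pred V) z : ~~ F u -> F z -> z != u.
  by move=> hFu hz; apply/eqP => hzu; move: hz; rewrite hzu (negbTE hFu).
case: (classic (exists v C, [/\ is_cycle v C, all A C & wgain C = 1])) => [[v [C [hC hA hg]]]|n1].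
  have [y [hy hout hPhi]] := mk_unit (cycle_walk hC) (cycle_nil hC) (Ap_avoid hA) hg.
  apply: (good_pack hy); first by move=> f; apply: Ap_supp hA.
  rewrite hout mulr0 hPhi leNgt; apply/negP => hlt; apply: hnu; exists v, C; split=> //.
  exact: Ap_avoid hA.
case: (classic (exists v C, [/\ is_cycle v C, all A C & 1 < wgain C])) => [[v [C [hC hA hg]]]|n2].
  pose F := reach A v.
  have hFcl (hFu : ~~ F u) e : x e != 0 -> F (src e) -> F (dst e).
    move=> hxe hFs; have hAe : A e by rewrite /A /Ap hxe (notu F _ hFu hFs).
    exact: reach_step hFs hAe.
  case: (boolP (F u)) => hFu.
    have [P [hP hPA]] := reach_path hFu.
    have hav : avoids_out src u (C ++ P) by rewrite avoids_cat !(Ap_avoid hA) (Ap_avoid hPA).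
    have [y [hy hout hPhi]] := mk_gen (cycle_walk hC) (cycle_nil hC) (path_walk hP) hav hg.
    apply: (good_pack hy).
      by move=> f; rewrite mem_cat => /orP [hf|hf]; [exact: Ap_supp hA hf | exact: Ap_supp hPA hf].
    rewrite hout mulr0 hPhi; apply: mulr_ge0; first by rewrite invr_ge0 subr_ge0 ltW.
    rewrite leNgt; apply/negP => hlt; apply: hng; exists v, C, P; split=> //.
  case: (classic (exists w D, [/\ is_cycle w D, all A D, wgain D < 1 & F w])) =>
      [[w [D [hD hDA hgD hFw]]]|n3].
    have [P [hP hPA]] := reach_path hFw.
    have hav : avoids_out src u (C ++ P ++ D)
      by rewrite !avoids_cat !(Ap_avoid hA) (Ap_avoid hPA) (Ap_avoid hDA).
    have [y [hy hout hPhi]] :=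
      mk_bic (cycle_walk hC) (cycle_nil hC) (path_walk hP) (cycle_walk hD) hav hg hgD.
    apply: (good_pack hy).
      move=> f; rewrite !mem_cat => /or3P [hf|hf|hf];
        [exact: Ap_supp hA hf | exact: Ap_supp hPA hf | exact: Ap_supp hDA hf].
    rewrite hout mulr0 hPhi.
    have : ~ (wcost P + wgain P * (wcost D / (1 - wgain D)) < - wcost C / (wgain C - 1)).
      by move=> hlt; apply: hnb; exists v, w, C, P, D; split=> //; split.
    move/negP; rewrite -leNgt mulNr; lra.
  exfalso.
  have hcyc v' C' : is_cycle v' C' -> all (fun e => (x e != 0) && F (src e)) C' -> 1 <= wgain C'.
    move=> h1 h2; rewrite leNgt; apply/negP => hlt; apply: n3; exists v', C'; split=> //.
      apply/allP => f hf; have /andP [hxf hFf] := allP h2 f hf.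
      by rewrite /A /Ap hxf (notu F _ hFu hFf).
    by have /mapP [g hgg ->] := cycle_head h1; have /andP [_ ->] := allP h2 g hgg.
  have hcF z : F z -> nabla x z = 0 by move=> hz; apply: hc; apply: (notu F _ hFu hz).
  have [th [thpos ht]] := FT hx hcF (hFcl hFu) hcyc.
  have htC f : f \in C -> th (src f) = gam f * th (dst f).
    move=> hf; apply: (ht f (Ap_supp hA hf)).1.
    exact: reach_arcs (reach_refl A v) (cycle_walk hC) hA f hf.
  have := tele_one hC thpos htC.
  by move=> h; move: hg; rewrite h ltxx.
have hall v C : is_cycle v C -> all A C -> wgain C < 1.
  move=> h1 h2; rewrite ltNge le_eqVlt; apply/negP => /orP [/eqP h|h].
    by apply: n1; exists v, C; split.
  by apply: n2; exists v, C; split.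
case: (classic (exists e0, x e0 != 0 /\ src e0 = u)) => [[e0 [he0 hsu]]|n4]; last first.
  exfalso; apply: (BT hx hc _ hall hne) => e hxe; apply/eqP => h; by apply: n4; exists e; split.
pose F := reach A (dst e0).
have hFcl (hFu : ~~ F u) e : x e != 0 -> F (src e) -> F (dst e).
  move=> hxe hFs; have hAe : A e by rewrite /A /Ap hxe (notu F _ hFu hFs).
  exact: reach_step hFs hAe.
have hsupp0 Q f : all A Q -> f \in e0 :: Q -> x f != 0.
  by move=> hQA; rewrite in_cons => /orP [/eqP ->//|hf]; exact: Ap_supp hQA hf.
case: (boolP (F u)) => hFu.
  have [Q [hQ hQA]] := reach_path hFu.
  have hw : walk u u (e0 :: Q) by rewrite /= hsu eqxx (path_walk hQ).
  have [y [hy hout hPhi]] := mk_upath hsu hw (Ap_avoid hQA).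
  apply: (good_pack hy); first by move=> f; apply: hsupp0.
  rewrite hout mulr1 hPhi; apply: HK1; exact: path_size hQ.
case: (classic (exists w D, [/\ is_cycle w D, all A D, wgain D < 1 & F w])) =>
    [[w [D [hD hDA hgD hFw]]]|n5].
  have [Q [hQ hQA]] := reach_path hFw.
  have hw : walk u w (e0 :: Q) by rewrite /= hsu eqxx (path_walk hQ).
  have [y [hy hout hPhi]] :=
    mk_uabs hsu hw (Ap_avoid hQA) (cycle_walk hD) (Ap_avoid hDA) hgD.
  apply: (good_pack hy).
    move=> f; rewrite mem_cat => /orP [hf|hf]; [exact: hsupp0 hQA hf | exact: Ap_supp hDA hf].
  rewrite hout mulr1 hPhi; apply: HK2; [exact: path_size hQ | exact: cycle_size hD].
exfalso.
have hcyc v' C' : is_cycle v' C' -> all (fun e => (x e != 0) && F (src e)) C' -> 1 <= wgain C'.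
  move=> h1 h2; exfalso; apply: n5; exists v', C'.
  have hA' : all A C'.
    apply/allP => f hf; have /andP [hxf hFf] := allP h2 f hf.
    by rewrite /A /Ap hxf (notu F _ hFu hFf).
  split=> //; first exact: hall h1 hA'.
  by have /mapP [g hgg ->] := cycle_head h1; have /andP [_ ->] := allP h2 g hgg.
have hcF z : F z -> nabla x z = 0 by move=> hz; apply: hc; apply: (notu F _ hFu hz).
have [th [thpos ht]] := FT hx hcF (hFcl hFu) hcyc.
have := (ht e0 he0).2 (reach_refl A (dst e0)).
by rewrite hsu (negbTE hFu).
Qed.

Lemma zero_case x : ~ (exists e, x e != 0) -> K * out x <= Phi x.
Proof.
move=> hz; have x0 f : x f = 0.
  by case: (x f =P 0) => // /eqP h; exfalso; apply: hz; exists f.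
rewrite /out /Phi !big1 ?mulr0 ?addr0 // => f _; by rewrite x0 ?mulr0.
Qed.

Lemma main_ind (n : nat) : forall x, (forall e, 0 <= x e) -> (forall z, z != u -> nabla x z = 0) ->
  (#|[pred e | x e != 0%R]| <= n)%N -> K * out x <= Phi x.
Proof.
elim: n => [|n IH] x hx hc hcard.
  case: (classic (exists e, x e != 0)) => [[e he]|hz]; last exact: zero_case.
  have : (0 < #|[pred e | x e != 0%R]|)%N by apply/card_gt0P; exists e.
  by rewrite lt0n -leqn0 hcard.
case: (classic (exists e, x e != 0)) => [hne|hz]; last exact: zero_case.
have [y [hy0 hys hyc [f0 hf0] hyK]] := elem hx hc hne.
pose l := [seq f <- enum E | y f != 0].
have hf0l : f0 \in l by rewrite mem_filter hf0 mem_enum.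
have [es hes hmin] := minl_ex (fun f => x f / y f) hf0l.
have hye : y es != 0 by move: hes; rewrite mem_filter => /andP [].
have hypos : 0 < y es by rewrite lt_def hye hy0.
have hxe : x es != 0 by apply: hys.
have hxpos : 0 < x es by rewrite lt_def hxe hx.
pose t := x es / y es.
have tpos : 0 < t by apply: divr_gt0.
pose x' f := x f - t * y f.
have hdec f : x f = x' f + t * y f by rewrite /x' subrK.
have hx'0 f : 0 <= x' f.
  rewrite /x'; case: (y f =P 0) => [->|/eqP hyf]; first by rewrite mulr0 subr0.
  have hyfp : 0 < y f by rewrite lt_def hyf hy0.
  rewrite subr_ge0 -ler_pdivlMr //; apply: hmin.
  by rewrite mem_filter hyf mem_enum.
have hx'c z : z != u -> nabla x' z = 0.
  move=> hz; have := nablaL z hdec; rewrite hc // hyc // mulr0 addr0.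
  by move=> <-.
have hlt : (#|[pred e | x' e != 0%R]| < #|[pred e | x e != 0%R]|)%N.
  apply: proper_card; apply/properP; split.
    apply/subsetP => f; rewrite !inE; apply: contra => /eqP hxf.
    have : y f = 0 by case: (y f =P 0) => // /eqP /hys; rewrite hxf eqxx.
    by move=> hyf; rewrite /x' hxf hyf mulr0 subr0.
  exists es; rewrite !inE //.
  by rewrite /x' /t divfK // subrr eqxx.
have := IH x' hx'0 hx'c (leq_trans (ltnSn _) (leq_trans hlt hcard)).
  move=> hK.
rewrite (outL hdec) (PhiL hdec) mulrDr; apply: lerD => //.
by rewrite mulrCA; apply: ler_wpM2l; [exact: ltW | exact: hyK].
Qed.

End Elem.

Lemma K_exists : exists K,
  (forall P, (size P <= #|V|)%N -> K <= wcost P + delta * wgain P) /\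
  (forall P D, (size P <= #|V|)%N -> (size D <= #|V|)%N ->
     K <= wcost P + wgain P * (wcost D / (1 - wgain D))).
Proof.
pose l1 := all_seqs E #|V|.
have [K1 h1] := lb_seq (fun P => wcost P + delta * wgain P) l1.
have [K2 h2] := lb_seq (fun p : seq E * seq E => wcost p.1 + wgain p.1 * (wcost p.2 / (1 - wgain p.2)))
   [seq (P, D) | P <- l1, D <- l1].
have hn1 := ler_norm (- K1); have hn2 := normr_ge0 K2; rewrite normrN in hn1.
exists (- (`|K1| + `|K2|)); split.
  move=> P hP; apply: le_trans (h1 P (mem_all_seqs hP)); lra.
move=> P D hP hD.
have := h2 (P, D) (allpairs_f pair (mem_all_seqs hP) (mem_all_seqs hD)) => /= h.
apply: le_trans h.
have hn3 := ler_norm (- K2); have hn4 := normr_ge0 K1; rewrite normrN in hn3; lra.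
Qed.

Lemma main_thm :
  f_minus_infty src dst c gam delta u <->
  ((exists x, inD src dst gam u x) /\
   (has_neg_unit_gain_cycle src dst c gam u \/
    has_neg_bicycle src dst c gam u \/
    has_neg_gen_cycle src dst c gam delta u)).
Proof.
have hobj x : objective dst c gam delta u x = Phi x - delta by [].
split.
- move=> hf; have [x0 [hx0 _]] := hf 0; split; first by exists x0.
  apply: NNPP => hn.
  have hnu : ~ has_neg_unit_gain_cycle src dst c gam u by move=> h; apply: hn; left.
  have hnb : ~ has_neg_bicycle src dst c gam u by move=> h; apply: hn; right; left.
  have hng : ~ has_neg_gen_cycle src dst c gam delta u by move=> h; apply: hn; right; right.
  have [K [HK1 HK2]] := K_exists.
  have [x [[hxn hxo hxc] hlt]] := hf (K - delta).
  have := main_ind HK1 HK2 hnu hnb hng hxn hxc (max_card _).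
  rewrite /out hxo mulr1 => hK.
  move: hlt; rewrite hobj; lra.
- case=> [[x0 hx0] hs].
  have [y [hy0 hyo hyc hyP]] : exists y, [/\ forall f, 0 <= y f, out y = 0,
      forall z, z != u -> nabla y z = 0 & Phi y < 0].
    case: hs => [[v [C [hC hav hg hcost]]]|[[v [w [C [P [D [hC hP hD hav [hgC hgD hlt]]]]]]]|[v [C [P [hC hP hav hgC hlt]]]]]].
    + have [y [[h1 _ h3 _] hout hPhi]] := mk_unit (cycle_walk hC) (cycle_nil hC) hav hg.
      by exists y; split=> //; rewrite hPhi.
    + have [y [[h1 _ h3 _] hout hPhi]] :=
        mk_bic (cycle_walk hC) (cycle_nil hC) (path_walk hP) (cycle_walk hD) hav hgC hgD.
      exists y; split=> //; rewrite hPhi; move: hlt; rewrite mulNr; lra.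
    + have [y [[h1 _ h3 _] hout hPhi]] :=
        mk_gen (cycle_walk hC) (cycle_nil hC) (path_walk hP) hav hgC.
      exists y; split=> //; rewrite hPhi pmulr_rlt0 //.
      by rewrite invr_gt0 subr_gt0.
  move=> M.
  case: hx0 => hx0n hx0o hx0c.
  set o := objective dst c gam delta u x0.
  pose t := (`|o - M| + 1) / (- Phi y).
  have ht0 : 0 <= t by apply: divr_ge0; [apply: addr_ge0 | rewrite oppr_ge0 ltW].
  have htP : t * Phi y = - (`|o - M| + 1).
    by rewrite /t; field; rewrite lt_eqF.
  pose x f := x0 f + t * y f.
  have hdec f : x f = x0 f + t * y f by [].
  exists x; split.
    split.
    + by move=> f; rewrite hdec; apply: addr_ge0 => //; apply: mulr_ge0.
    + have h := outL hdec; rewrite hyo mulr0 addr0 /out in h; by rewrite h.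
    + by move=> z hz; rewrite (nablaL z hdec) hx0c // hyc // mulr0 addr0.
  rewrite hobj (PhiL hdec) htP.
  have := ler_norm (o - M); rewrite /o hobj; lra.
Qed.

End Flow.

Theorem lemma4p6 (R : realFieldType) (V E : finType) (src dst : E -> V)
    (c gam : E -> R) (hgam : forall e, 0 < gam e) (u : V) (delta : R) :
  f_minus_infty src dst c gam delta u <->
  ((exists x, inD src dst gam u x) /\
   (has_neg_unit_gain_cycle src dst c gam u \/
    has_neg_bicycle src dst c gam u \/
    has_neg_gen_cycle src dst c gam delta u)).
Proof. exact: (@main_thm R V E src dst c gam hgam u delta). Qed.
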